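(* Let $G$ be an infinite locally finite connected graph and $(F_i)_{i=1}^\infty$ a sequence of finite connected subgraphs of $G$ such that, for all $i\ge1$, $F_i\le F_{i+1}$ and $N_G(F_i)\subseteq V(F_{i+1})$. Set $F=\bigcup_{i=1}^\infty F_i$. Suppose that for every $i\ge1$ and every component $H$ of $G-V(F_{i+1})$ there is a component $D$ of $F_{i+1}-V(F_i)$ with $N_G(H)\subseteq V(D)$. Then $F$ is a spanning subgraph of $G$ that is faithful to $G$.
   Context: For $X\subseteq V(G)$, $N_G(X)=\bigcup_{v\in X}N_G(v)\setminus X$; for a subgraph $H$, $N_G(H)=N_G(V(H))$. A ray is a one-way infinite path; two rays of a graph $H$ are equivalent in $H$ if for every finite $S\subseteq V(H)$ some component of $H-S$ contains tails of both; the classes are the ends of $H$. A subgraph $F$ of $G$ is faithful to $G$ if (i) every end of $G$ contains a ray of $F$, and (ii) any two rays of $F$ are equivalent in $F$ if and only if they are equivalent in $G$. *)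

(* Defs.v *)
From Stdlib Require Import List Arith.
Set Implicit Arguments.

Section Graphs.
Variable V : Type.

Definition simple_graph (adj : V -> V -> Prop) : Prop :=
  (forall x y, adj x y -> adj y x) /\ (forall x, ~ adj x x).

Definition finite_set (X : V -> Prop) : Prop :=
  exists l : list V, forall x, X x -> In x l.

Definition infinite_graph : Prop := ~ finite_set (fun _ => True).

Definition locally_finite (adj : V -> V -> Prop) : Prop :=
  forall v, finite_set (fun w => adj v w).

Record subgraph := Subgraph { sv : V -> Prop; se : V -> V -> Prop }.

Definition whole (adj : V -> V -> Prop) : subgraph := Subgraph (fun _ => True) adj.

Definition is_subgraph (adj : V -> V -> Prop) (H : subgraph) : Prop :=
  (forall x y, se H x y -> se H y x) /\
  (forall x y, se H x y -> adj x y /\ sv H x /\ sv H y).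

Definition sub_le (H K : subgraph) : Prop :=
  (forall x, sv H x -> sv K x) /\ (forall x y, se H x y -> se K x y).

Inductive reach (H : subgraph) : V -> V -> Prop :=
| reach0 x : sv H x -> reach H x x
| reachS x y z : se H x y -> reach H y z -> reach H x z.

Definition connected (H : subgraph) : Prop :=
  (exists v, sv H v) /\ (forall x y, sv H x -> sv H y -> reach H x y).

Definition finite_subgraph (H : subgraph) : Prop := finite_set (sv H).

Definition delete (H : subgraph) (X : V -> Prop) : subgraph :=
  Subgraph (fun x => sv H x /\ ~ X x) (fun x y => se H x y /\ ~ X x /\ ~ X y).

Definition is_component (H : subgraph) (C : V -> Prop) : Prop :=
  exists x, sv H x /\ forall y, C y <-> reach H x y.

Definition nbhd (adj : V -> V -> Prop) (X : V -> Prop) : V -> Prop :=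
  fun y => ~ X y /\ exists x, X x /\ adj x y.

Definition subset (X Y : V -> Prop) : Prop := forall x, X x -> Y x.

Definition union_seq (F : nat -> subgraph) : subgraph :=
  Subgraph (fun x => exists i, sv (F i) x) (fun x y => exists i, se (F i) x y).

Definition is_ray (H : subgraph) (r : nat -> V) : Prop :=
  (forall m n, r m = r n -> m = n) /\ (forall n, se H (r n) (r (S n))).

Definition ray_equiv (H : subgraph) (r1 r2 : nat -> V) : Prop :=
  forall S : V -> Prop, finite_set S -> subset S (sv H) ->
    exists C, is_component (delete H S) C /\
      exists k, forall n, k <= n -> C (r1 n) /\ C (r2 n).

Definition spanning (adj : V -> V -> Prop) (F : subgraph) : Prop :=
  is_subgraph adj F /\ forall v, sv F v.

(* F faithful to G: (i) every end of G contains a ray of F, i.e. every ray of G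
   is G-equivalent to some ray of F; (ii) rays of F are equivalent in F iff in G. *)
Definition faithful (adj : V -> V -> Prop) (F : subgraph) : Prop :=
  is_subgraph adj F /\
  (forall r, is_ray (whole adj) r ->
     exists r', is_ray F r' /\ ray_equiv (whole adj) r r') /\
  (forall r1 r2, is_ray F r1 -> is_ray F r2 ->
     (ray_equiv F r1 r2 <-> ray_equiv (whole adj) r1 r2)).

End Graphs.

(* Main.v *)
Require Import Defs.
From Stdlib Require Import List Arith Lia Classical IndefiniteDescription.

Set Implicit Arguments.
Section Gen.
Variable V : Type.

Definition restrict (H : subgraph V) (P : V -> Prop) : subgraph V :=
  Subgraph (fun x => sv H x /\ P x) (fun x y => se H x y /\ P x /\ P y).

Definition good (H : subgraph V) : Prop :=
  (forall x y, se H x y -> se H y x) /\ (forall x y, se H x y -> sv H x /\ sv H y).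

Inductive walkn (H : subgraph V) : nat -> V -> V -> Prop :=
| wn0 x : sv H x -> walkn H 0 x x
| wnS n x y z : se H x y -> walkn H n y z -> walkn H (S n) x z.

Lemma reach_walkn (H : subgraph V) x y : reach H x y -> exists n, walkn H n x y.
Proof. induction 1. exists 0; now constructor. destruct IHreach as [n Hn]. exists (S n); econstructor; eauto. Qed.

Lemma reach_sv_r (H : subgraph V) x y : reach H x y -> sv H y.
Proof. induction 1; auto. Qed.

Lemma reach_trans (H : subgraph V) x y z : reach H x y -> reach H y z -> reach H x z.
Proof. induction 1; intros; auto. econstructor; eauto. Qed.

Lemma reach_edge (H : subgraph V) x y : good H -> se H x y -> reach H x y.
Proof. intros [_ Hg] Hxy. apply reachS with y; auto. constructor. apply (Hg x y Hxy). Qed.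

Lemma reach_sym (H : subgraph V) x y : good H -> reach H x y -> reach H y x.
Proof. intros Hg. induction 1. now constructor.
  apply reach_trans with y; auto. apply reach_edge; auto. apply (proj1 Hg); auto. Qed.

Lemma reach_mono (H H' : subgraph V) x y : (forall a, sv H a -> sv H' a) -> (forall a b, se H a b -> se H' a b) ->
  reach H x y -> reach H' x y.
Proof. intros h1 h2. induction 1. constructor; auto. econstructor; eauto. Qed.

Lemma reach_mono_inv (H H' : subgraph V) (P : V -> Prop) x y : (forall a, sv H a -> P a -> sv H' a) ->
  (forall a b, se H a b -> P a -> P b /\ se H' a b) ->
  reach H x y -> P x -> reach H' x y.
Proof. intros h1 h2. induction 1; intros. constructor; auto.
  destruct (h2 _ _ H0 H2). econstructor; eauto. Qed.

Lemma first_exit (H : subgraph V) (P : V -> Prop) (x z : V) : (forall a b, se H a b -> sv H a) ->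
  reach H x z -> P x -> ~ P z ->
  exists a b, reach (restrict H P) x a /\ se H a b /\ P a /\ ~ P b.
Proof. intros hs. induction 1; intros. contradiction.
  destruct (classic (P y)) as [Py|Py].
  - destruct (IHreach Py H3) as [a [b [h1 [h2 [h3 h4]]]]]. exists a, b. repeat split; auto.
    apply reachS with y; auto. simpl; auto.
  - exists x, y. repeat split; auto. constructor. simpl. split; eauto.
Qed.

Lemma good_delete (H : subgraph V) (X : V -> Prop) : good H -> good (delete H X).
Proof. intros [h1 h2]; split; simpl; intros x y [a [b c]]; destruct (h2 _ _ a); repeat split; auto. Qed.

Lemma good_restrict (H : subgraph V) (X : V -> Prop) : good H -> good (restrict H X).
Proof. intros [h1 h2]; split; simpl; intros x y [a [b c]]; destruct (h2 _ _ a); repeat split; auto. Qed.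

Lemma comp_conn (H : subgraph V) (C : V -> Prop) (x y : V) : good H -> is_component H C -> C x -> C y -> reach H x y.
Proof. intros hg [x0 [_ hc]] hx hy. apply hc in hx; apply hc in hy.
  apply reach_trans with x0; auto. apply reach_sym; auto. Qed.

Lemma erase (w : nat -> V) (E : V -> V -> Prop) :
  (forall m, w (S m) = w m \/ E (w m) (w (S m))) ->
  (forall v, exists N, forall m, N <= m -> w m <> v) ->
  exists f : nat -> nat, (forall n, n <= f n) /\ (forall m n, w (f m) = w (f n) -> m = n) /\
    (forall n, E (w (f n)) (w (f (S n)))).
Proof.
  intros hstep hfin.
  assert (hl : forall k, exists L, k <= L /\ w L = w k /\ forall m, L < m -> w m <> w k).
  { intro k. destruct (hfin (w k)) as [N hN].
    assert (forall B, (forall m, B <= m -> w m <> w k) ->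
      exists L, k <= L /\ w L = w k /\ forall m, L < m -> w m <> w k).
    { induction B; intros hB.
      - exfalso. apply (hB k); auto; lia.
      - destruct (classic (w B = w k)) as [e|e].
        + destruct (le_lt_dec k B).
          * exists B; repeat split; auto; intros; apply hB; lia.
          * exfalso; apply (hB k); auto; lia.
        + apply IHB. intros m hm. destruct (Nat.eq_dec m B). subst; auto. apply hB; lia. }
    eauto. }
  set (lst := fun k => proj1_sig (constructive_indefinite_description _ (hl k))).
  assert (hlst : forall k, k <= lst k /\ w (lst k) = w k /\ forall m, lst k < m -> w m <> w k).
  { intro k. exact (proj2_sig (constructive_indefinite_description _ (hl k))). }
  set (f := fun n => Nat.iter n (fun a => lst (S a)) (lst 0)).
  assert (fS : forall n, f (S n) = lst (S (f n))) by reflexivity.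
  assert (hP : forall n m, f n < m -> w m <> w (f n)).
  { intros n m hm. assert (exists k, f n = lst k) as [k hk].
    { destruct n. exists 0; reflexivity. exists (S (f n)); apply fS. }
    rewrite hk in *. destruct (hlst k) as [_ [e h]]. rewrite e. auto. }
  assert (hinc : forall n, S (f n) <= f (S n)).
  { intro n. rewrite fS. apply hlst. }
  assert (hlt : forall m n, m < n -> f m < f n).
  { intros m n h. induction h. apply hinc. specialize (hinc m0). lia. }
  exists f. split; [|split].
  - induction n. lia. specialize (hinc n); lia.
  - intros m n e. destruct (lt_eq_lt_dec m n) as [[h|h]|h]; auto.
    + exfalso. apply (hP m (f n)); auto.
    + exfalso. apply (hP n (f m)); auto.
  - intro n. rewrite fS. destruct (hlst (S (f n))) as [_ [e _]]. rewrite e.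
    destruct (hstep (f n)) as [h|h]; auto. exfalso. apply (hP n (S (f n))); auto.
Qed.

End Gen.

Set Implicit Arguments.
Section Main.
Variable V : Type.
Variable adj : V -> V -> Prop.
Variable F : nat -> subgraph V.
Hypothesis Hsimple : simple_graph adj.
Hypothesis Hconn : connected (whole adj).
Hypothesis HFsub : forall i, is_subgraph adj (F i).
Hypothesis HFfin : forall i, finite_subgraph (F i).
Hypothesis HFconn : forall i, connected (F i).
Hypothesis Hmono : forall i, sub_le (F i) (F (S i)).
Hypothesis Hnbhd : forall i, subset (nbhd adj (sv (F i))) (sv (F (S i))).
Hypothesis Hcomp : forall i (H : V -> Prop),
      is_component (delete (whole adj) (sv (F (S i)))) H ->
      exists D, is_component (delete (F (S i)) (sv (F i))) D /\
                subset (nbhd adj H) D.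

Local Notation UF := (union_seq F).
Local Notation G_ i := (delete (whole adj) (sv (F (S i)))).
Local Notation Dsub i := (delete (F (S i)) (sv (F i))).

Lemma Fsv_mono i j x : i <= j -> sv (F i) x -> sv (F j) x.
Proof. induction 1; auto. intro h. apply (proj1 (Hmono m)); auto. Qed.

Lemma span_all v : exists i, sv (F i) v.
Proof.
  destruct Hconn as [_ Hc]. destruct (HFconn 0) as [[x0 Hx0] _].
  assert (forall x z, reach (whole adj) x z -> (exists i, sv (F i) x) -> exists i, sv (F i) z).
  { induction 1; auto. intros [i Hi]. apply IHreach. simpl in H.
    destruct (classic (sv (F i) y)). exists i; auto. exists (S i). apply Hnbhd. split; auto. exists x; auto. }
  apply (H x0 v (Hc x0 v I I)). eauto.
Qed.

Lemma finite_in_F (S0 : V -> Prop) : finite_set S0 -> exists j, forall x, S0 x -> sv (F j) x.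
Proof.
  intros [l Hl]. assert (exists j, forall x, In x l -> sv (F j) x) as [j Hj].
  { clear Hl. induction l. exists 0; simpl; tauto.
    destruct IHl as [j Hj]. destruct (span_all a) as [k Hk]. exists (max j k).
    intros x [<-|Hx]. apply Fsv_mono with k; auto; lia. apply Fsv_mono with j; auto; lia. }
  exists j; auto.
Qed.

Lemma good_F i : good (F i).
Proof. destruct (HFsub i) as [h1 h2]. split; auto. intros x y h; apply h2 in h; tauto. Qed.

Lemma good_UF : good UF.
Proof. split; simpl; intros x y [i h]. exists i; apply (proj1 (HFsub i)); auto.
  destruct (proj2 (HFsub i) _ _ h) as [_ [a b]]; split; eauto. Qed.

Lemma good_whole : good (whole adj).
Proof. split; simpl; auto. apply Hsimple. Qed.

Lemma UF_sub : is_subgraph adj UF.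
Proof. split; simpl. intros x y [i h]; exists i; apply (proj1 (HFsub i)); auto.
  intros x y [i h]. destruct (proj2 (HFsub i) _ _ h) as [a [b c]]; split; eauto. Qed.

Lemma comp_avoid {i H y} : is_component (G_ i) H -> H y -> ~ sv (F (S i)) y.
Proof. intros [x0 [_ hc]] hy. apply hc in hy. apply reach_sv_r in hy. simpl in hy. tauto. Qed.

Lemma D_avoid {i D y} : is_component (Dsub i) D -> D y -> sv (F (S i)) y /\ ~ sv (F i) y.
Proof. intros [x0 [_ hc]] hy. apply hc in hy. apply reach_sv_r in hy. simpl in hy. tauto. Qed.

Lemma D_nonempty {i D} : is_component (Dsub i) D -> exists d, D d.
Proof. intros [x0 [h hc]]. exists x0. apply hc. constructor; auto. Qed.

Lemma D_conn i D (P : V -> Prop) x y : is_component (Dsub i) D -> (forall z, D z -> P z) ->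
  D x -> D y -> reach (restrict UF P) x y.
Proof.
  intros hD hP hx hy.
  assert (gD : good (Dsub i)) by (apply good_delete, good_F).
  assert (h : reach (Dsub i) x y) by (apply comp_conn with D; auto).
  apply reach_mono_inv with (H := Dsub i) (P := D); auto.
  - intros a [ha _] hDa. simpl. split; eauto.
  - intros a b hab hDa. destruct hD as [x0 [_ hc]].
    assert (hb : D b). { apply hc. apply reach_trans with a. apply hc; auto. apply reach_edge; auto. }
    split; auto. simpl. destruct hab as [hab _]. split; eauto.
Qed.

Lemma F3 {i H D} : is_component (G_ i) H -> is_component (Dsub i) D -> subset (nbhd adj H) D ->
  forall x, H x -> exists d, D d /\ reach (restrict UF (fun y => H y \/ D y)) x d.
Proof.
  intros hH hD hnb x hx.
  destruct (span_all x) as [j hj].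
  destruct (HFconn (S i)) as [[z hz] _].
  destruct (le_lt_dec j (S i)) as [l|l].
  { exfalso. apply (comp_avoid hH hx). apply Fsv_mono with j; auto. }
  assert (hzj : sv (F j) z) by (apply Fsv_mono with (S i); auto; lia).
  assert (hr := proj2 (HFconn j) x z hj hzj).
  destruct (first_exit H (fun a b h => proj1 (proj2 (proj2 (HFsub j) a b h))) hr hx)
    as [a [b [h1 [h2 [h3 h4]]]]].
  { intro hHz. apply (comp_avoid hH hHz hz). }
  assert (hDb : D b).
  { apply hnb. split; auto. exists a; split; auto. apply (proj2 (HFsub j) _ _ h2). }
  exists b; split; auto.
  apply reach_trans with a.
  - apply reach_mono with (H := restrict (F j) H); auto.
    + intros c [hc1 hc2]; simpl; split; eauto.
    + intros c e [hc1 [hc2 hc3]]; simpl; split; eauto.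
  - apply reach_edge. apply good_restrict, good_UF. simpl. split; eauto.
Qed.

Lemma tail_exists (r : nat -> V) : is_ray (whole adj) r -> forall i, exists N, forall n, N <= n -> ~ sv (F i) (r n).
Proof.
  intros [hinj _] i. destruct (HFfin i) as [l hl].
  assert (exists N, forall n, N <= n -> ~ In (r n) l) as [N hN].
  { clear hl. induction l. exists 0; simpl; tauto.
    destruct IHl as [N hN]. destruct (classic (exists k, r k = a)) as [[k hk]|hk].
    - exists (max N (S k)). intros n hn [e|e].
      + subst a. apply hinj in e. lia.
      + apply (hN n); auto; lia.
    - exists N. intros n hn [e|e]. apply hk; eauto. apply (hN n); auto. }
  exists N. intros n hn h. apply (hN n hn). apply hl; auto.
Qed.

Section Ray.
Variable r : nat -> V.
Hypothesis Hr : is_ray (whole adj) r.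

Definition tail i N := forall n, N <= n -> ~ sv (F (S i)) (r n).
Definition T i y := exists N, tail i N /\ reach (G_ i) (r N) y.

Lemma tail_ex i : exists N, tail i N.
Proof. apply (tail_exists Hr). Qed.

Lemma tail_reach i : forall d N, tail i N -> reach (G_ i) (r N) (r (N + d)).
Proof.
  induction d; intros N hN.
  - rewrite Nat.add_0_r. constructor. simpl. split; auto; apply hN; lia.
  - replace (N + S d) with (S N + d) by lia. apply reachS with (r (S N)).
    + simpl. split. apply (proj2 Hr N). split; apply hN; lia.
    + apply IHd. intros n hn; apply hN; lia.
Qed.

Lemma tail_conn i N M : tail i N -> tail i M -> reach (G_ i) (r N) (r M).
Proof.
  intros hN hM. destruct (le_ge_dec N M).
  - replace M with (N + (M - N)) by lia. apply tail_reach; auto.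
  - apply reach_sym. apply good_delete, good_whole.
    replace N with (M + (N - M)) by lia. apply tail_reach; auto.
Qed.

Lemma T_comp i : is_component (G_ i) (T i).
Proof.
  destruct (tail_ex i) as [N hN]. exists (r N). split.
  - simpl; split; auto; apply hN; auto.
  - intro y; split.
    + intros [M [hM hy]]. apply reach_trans with (r M); auto. apply tail_conn; auto.
    + intro h; exists N; auto.
Qed.

Lemma T_nest i y : T (S i) y -> T i y.
Proof.
  intros [N [hN hy]]. exists N. split.
  - intros n hn h. apply (hN n hn). apply (proj1 (Hmono (S i))); auto.
  - apply reach_mono with (H := G_ (S i)); auto.
    + intros a [_ ha]. simpl. split; auto. intro h; apply ha, (proj1 (Hmono (S i))); auto.
    + intros a b [h1 [h2 h3]]; simpl; split; auto. split; intro h.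
      apply h2, (proj1 (Hmono (S i))); auto. apply h3, (proj1 (Hmono (S i))); auto.
Qed.

Lemma T_nest_le i j y : i <= j -> T j y -> T i y.
Proof. induction 1; auto. intro h; apply IHle, T_nest; auto. Qed.

Lemma Dex i : exists D, is_component (Dsub i) D /\ subset (nbhd adj (T i)) D.
Proof. apply Hcomp, T_comp. Qed.

Definition D i := proj1_sig (constructive_indefinite_description _ (Dex i)).
Lemma D_spec i : is_component (Dsub i) (D i) /\ subset (nbhd adj (T i)) (D i).
Proof. exact (proj2_sig (constructive_indefinite_description _ (Dex i))). Qed.

Definition R i y := T i y \/ D i y.

Lemma D_sub_T {i y} : D (S i) y -> T i y.
Proof.
  intro hy. destruct (D_spec (S i)) as [hD hnb].
  destruct (tail_ex (S i)) as [N hN].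
  destruct (HFconn (S (S i))) as [[z hz] _].
  assert (ht : T (S i) (r N)). { exists N; split; auto. constructor. simpl; split; auto; apply hN; auto. }
  assert (hr := proj2 Hconn (r N) z I I).
  destruct (first_exit (T (S i)) (H := whole adj) (fun a b h => I) hr ht) as [a [b [h1 [h2 [h3 h4]]]]].
  { intro h. apply (comp_avoid (T_comp (S i)) h hz). }
  assert (hDb : D (S i) b). { apply hnb. split; auto. exists a; auto. }
  destruct (D_avoid hD hDb) as [_ hb].
  assert (ha : ~ sv (F (S i)) a).
  { intro h. apply (comp_avoid (T_comp (S i)) h3). apply (proj1 (Hmono (S i))); auto. }
  assert (hTb : T i b).
  { destruct (T_nest h3) as [M [hM hM']]. exists M; split; auto.
    apply reach_trans with a; auto. apply reach_edge. apply good_delete, good_whole.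
    simpl; auto. }
  destruct hTb as [M [hM hM']]. exists M; split; auto.
  apply reach_trans with b; auto.
  assert (hh : reach (Dsub (S i)) b y) by (apply comp_conn with (D (S i)); auto; apply good_delete, good_F).
  apply reach_mono with (H := Dsub (S i)); auto.
  - intros c [_ hc]; simpl; auto.
  - intros c e [h5 [h6 h7]]; simpl. split; auto. apply (proj2 (HFsub _) _ _ h5).
Qed.

Lemma R_sub i y : R (S i) y -> T i y.
Proof. intros [h|h]. apply T_nest; auto. apply D_sub_T; auto. Qed.

Lemma R_T_le i j y : S j <= i -> R i y -> T j y.
Proof. intros hl hy. destruct i. lia. apply T_nest_le with i. lia. apply R_sub; auto. Qed.

Lemma R_step {i v} : R i v -> exists y, R (S i) y /\ reach (restrict UF (R i)) v y.
Proof.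
  intro hv. destruct (D_spec i) as [hD hnb]. destruct (D_spec (S i)) as [hD' _].
  destruct (D_nonempty hD') as [b hb]. exists b. split. right; auto.
  assert (hTb := D_sub_T hb).
  destruct (F3 (T_comp i) hD hnb _ hTb) as [d2 [hd2 hr2]].
  assert (exists d1, D i d1 /\ reach (restrict UF (R i)) v d1) as [d1 [hd1 hr1]].
  { destruct hv as [hv|hv].
    - apply (F3 (T_comp i) hD hnb _ hv).
    - exists v; split; auto. constructor. split; auto. apply span_all. right; auto. }
  apply reach_trans with d1; auto. apply reach_trans with d2.
  - apply D_conn with i (D i); auto. intros; right; auto.
  - apply reach_sym; auto. apply good_restrict, good_UF.
Qed.

Record St := mkSt { stv : V; sti : nat; std : nat }.
Definition Inv (s : St) := R (sti s) (stv s) /\ exists y, R (S (sti s)) y /\ walkn (restrict UF (R (sti s))) (std s) (stv s) y.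
Definition Step (s s' : St) := (stv s' = stv s \/ se UF (stv s) (stv s')) /\
  ((sti s' = sti s /\ std s' < std s) \/ sti s' = S (sti s)).

Lemma inv_step s : Inv s -> exists s', Inv s' /\ Step s s'.
Proof.
  destruct s as [v i d]; unfold Inv, Step; simpl. intros [hv [y [hy hw]]].
  destruct d.
  - inversion hw; subst.
    destruct (R_step hy) as [y' [hy' hr]]. destruct (reach_walkn hr) as [n hn].
    exists (mkSt y (S i) n); simpl. split; [split; eauto | split; auto].
  - inversion hw; subst.
    exists (mkSt y0 i d); simpl. destruct H0 as [h1 [h2 h3]].
    split; [split; eauto| split; auto].
Qed.

Lemma walk_ex : exists w : nat -> V, (forall m, w (S m) = w m \/ se UF (w m) (w (S m))) /\
  (forall j, exists M, forall m, M <= m -> T j (w m)).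
Proof.
  assert (hg : forall s, exists s', Inv s -> Inv s' /\ Step s s').
  { intro s; destruct (classic (Inv s)) as [h|h].
    - destruct (inv_step h) as [s' hs']; exists s'; auto.
    - exists s; tauto. }
  set (g := fun s => proj1_sig (constructive_indefinite_description _ (hg s))).
  assert (hgs : forall s, Inv s -> Inv (g s) /\ Step s (g s)).
  { intro s. exact (proj2_sig (constructive_indefinite_description _ (hg s))). }
  assert (exists s0, Inv s0) as [s0 hs0].
  { destruct (D_nonempty (proj1 (D_spec 0))) as [d0 hd0].
    assert (h0 : R 0 d0) by (right; auto).
    destruct (R_step h0) as [y [hy hr]]. destruct (reach_walkn hr) as [n hn].
    exists (mkSt d0 0 n). split; eauto. }
  set (sq := fun n => Nat.iter n g s0).
  assert (hsS : forall n, sq (S n) = g (sq n)) by reflexivity.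
  assert (hinv : forall n, Inv (sq n)).
  { induction n. exact hs0. rewrite hsS. apply hgs; auto. }
  assert (hstep : forall n, Step (sq n) (sq (S n))).
  { intro n. rewrite hsS. apply hgs; auto. }
  assert (hmon : forall m m', m <= m' -> sti (sq m) <= sti (sq m')).
  { induction 1; auto. destruct (hstep m0) as [_ [[e _]|e]]; lia. }
  assert (hprog : forall d m, std (sq m) <= d -> exists m', S (sti (sq m)) <= sti (sq m')).
  { induction d; intros m hm.
    - exists (S m). destruct (hstep m) as [_ [[e e']|e]]; lia.
    - destruct (hstep m) as [_ [[e e']|e]].
      + destruct (IHd (S m)) as [m' hm']. lia. exists m'. lia.
      + exists (S m); lia. }
  assert (hall : forall j, exists m, j <= sti (sq m)).
  { induction j. exists 0; lia. destruct IHj as [m hm].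
    destruct (hprog _ m (le_n _)) as [m' hm']. exists m'; lia. }
  exists (fun n => stv (sq n)). split.
  - intro m. destruct (hstep m) as [h _]. exact h.
  - intro j. destruct (hall (S j)) as [m hm]. exists m. intros m' hm'.
    apply R_T_le with (sti (sq m')). specialize (hmon _ _ hm'); lia. apply hinv.
Qed.

End Ray.

Lemma part_i r : is_ray (whole adj) r -> exists r', is_ray UF r' /\ ray_equiv (whole adj) r r'.
Proof.
  intro Hr. destruct (walk_ex Hr) as [w [hw1 hw2]].
  assert (hfin : forall v, exists N, forall m, N <= m -> w m <> v).
  { intro v. destruct (span_all v) as [j hj]. destruct (hw2 j) as [M hM]. exists M.
    intros m hm e. apply (comp_avoid (T_comp Hr j) (hM m hm)). rewrite e.
    apply Fsv_mono with j; auto. }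
  destruct (@erase V w (se UF) hw1 hfin) as [f [hf1 [hf2 hf3]]].
  exists (fun n => w (f n)). split. split; auto.
  intros S0 hS _. destruct (finite_in_F hS) as [j hj].
  destruct (tail_ex Hr j) as [N hN]. destruct (hw2 j) as [M hM].
  assert (hmono : forall x y, reach (G_ j) x y -> reach (delete (whole adj) S0) x y).
  { intros x y; apply reach_mono.
    - intros a [_ ha]; simpl; split; auto. intro h; apply ha. apply Fsv_mono with j; auto.
    - intros a b [h1 [h2 h3]]; simpl; split; auto. split; intro h.
      apply h2; apply Fsv_mono with j; auto. apply h3; apply Fsv_mono with j; auto. }
  exists (fun y => reach (delete (whole adj) S0) (r N) y). split.
  - exists (r N). split. simpl. split; auto. intro h. apply (hN N); auto. apply Fsv_mono with j; auto.
    tauto.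
  - exists (max N M). intros n hn. split.
    + apply hmono. apply tail_conn; auto. intros m hm; apply hN; lia.
    + destruct (hM (f n)) as [N' [hN' hr']]. specialize (hf1 n); lia.
      apply hmono. apply reach_trans with (r N'); auto. apply tail_conn; auto.
Qed.

Lemma part_ii1 r1 r2 : ray_equiv UF r1 r2 -> ray_equiv (whole adj) r1 r2.
Proof.
  intros h S0 hS _. destruct (h S0 hS) as [C [[x0 [hx0 hC]] [k hk]]].
  { intros x _. apply span_all. }
  exists (fun y => reach (delete (whole adj) S0) x0 y). split.
  - exists x0. split. simpl. split; auto. apply hx0. tauto.
  - assert (hm : forall y, reach (delete UF S0) x0 y -> reach (delete (whole adj) S0) x0 y).
    { intro y. apply reach_mono.
      - intros a [_ ha]; simpl; split; auto.
      - intros a b [h1 h2]; simpl; split; auto. apply (proj2 UF_sub _ _ h1). }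
    exists k. intros n hn. destruct (hk n hn) as [a b]. split; apply hm, hC; auto.
Qed.

Lemma part_ii2 r1 r2 : ray_equiv (whole adj) r1 r2 -> ray_equiv UF r1 r2.
Proof.
  intros h S0 hS _. destruct (finite_in_F hS) as [j hj].
  destruct (h (sv (F (S j))) (HFfin (S j))) as [C' [hC' [k hk]]]. { intros x _; exact I. }
  destruct (Hcomp j hC') as [D0 [hD hnb]].
  destruct (D_nonempty hD) as [d0 hd0].
  destruct (D_avoid hD hd0) as [hd0a hd0b].
  exists (fun y => reach (delete UF S0) d0 y). split.
  - exists d0. split. simpl. split. exists (S j); auto. intro e; apply hd0b; auto. tauto.
  - assert (key : forall x, C' x -> reach (delete UF S0) d0 x).
    { intros x hx. destruct (F3 hC' hD hnb _ hx) as [d [hd hr]].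
      assert (hr2 : reach (restrict UF (fun y => C' y \/ D0 y)) d0 x).
      { apply reach_sym. apply good_restrict, good_UF. apply reach_trans with d; auto.
        apply D_conn with j D0; auto. }
      apply reach_mono with (H := restrict UF (fun y => C' y \/ D0 y)); auto.
      - intros a [ha [hb|hb]]; split; auto; intro e.
        + apply (comp_avoid hC' hb). apply Fsv_mono with j; auto.
        + apply (proj2 (D_avoid hD hb)); auto.
      - intros a b [h1 [h2 h3]]; split; auto.
        assert (forall c, C' c \/ D0 c -> ~ S0 c).
        { intros c [hc|hc] e. apply (comp_avoid hC' hc). apply Fsv_mono with j; auto.
          apply (proj2 (D_avoid hD hc)); auto. }
        auto. }
    exists k. intros n hn. destruct (hk n hn); split; apply key; auto.
Qed.

End Main.

Theorem lemma12 (V : Type) (adj : V -> V -> Prop) (F : nat -> subgraph V)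
  (Hsimple : simple_graph adj)
  (Hinf : infinite_graph V)
  (Hlf : locally_finite adj)
  (Hconn : connected (whole adj))
  (HFsub : forall i, is_subgraph adj (F i))
  (HFfin : forall i, finite_subgraph (F i))
  (HFconn : forall i, connected (F i))
  (Hmono : forall i, sub_le (F i) (F (S i)))
  (Hnbhd : forall i, subset (nbhd adj (sv (F i))) (sv (F (S i))))
  (Hcomp : forall i (H : V -> Prop),
      is_component (delete (whole adj) (sv (F (S i)))) H ->
      exists D, is_component (delete (F (S i)) (sv (F i))) D /\
                subset (nbhd adj H) D) :
  spanning adj (union_seq F) /\ faithful adj (union_seq F).
Proof.
  split; [split|split; [|split]].
  - eapply UF_sub; eauto.
  - intro v. eapply span_all; eauto.
  - eapply UF_sub; eauto.
  - intros r Hr. eapply part_i; eauto.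
  - intros r1 r2 _ _. split; intro h.
    + eapply part_ii1; eauto.
    + eapply part_ii2; eauto.
Qed.
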